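(* Let $l\ge 1$ and $0\le k\le l-1$. The $(k+1)$-qubit gate $C^kZ^{2^{k-l+1}}$ can be implemented exactly by a circuit consisting of CNOT gates and a single layer (i.e. gates acting in parallel on distinct qubits) of the single-qubit gates $Z^{2^{1-l}}$ and $(Z^{2^{1-l}})^{-1}$, using additional ancilla qubits initialized to $|0\rangle$ and returned to $|0\rangle$.
   Context: $C^kZ^{2^{k-l+1}}$ is the diagonal gate on $k+1$ qubits acting as the identity on all computational basis states except $|1^{k+1}\rangle$, which it multiplies by the phase $e^{i\pi 2^{1+k-l}}$. The single-qubit gate $Z^{2^{1-l}}=|0\rangle\langle0|+e^{i\pi 2^{1-l}}|1\rangle\langle1|$. *)

(* Defs.v *)
From HB Require Import structures.
From mathcomp Require Import all_boot all_order all_algebra.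
From mathcomp Require Import reals trigo.
From mathcomp Require Import complex.
Set Implicit Arguments. Unset Strict Implicit. Unset Printing Implicit Defensive.
Import Order.TTheory GRing.Theory Num.Theory.
Local Open Scope ring_scope.

Section Qcirc.
Variable R : realType.
Local Notation C := (R[i]).

Definition expi (t : R) : C := Complex (cos t) (sin t).

Definition basis (n : nat) := {ffun 'I_n -> bool}.

(* an operator on n qubits, given by its matrix entries  <y| U |x>  *)
Definition op (n : nat) := basis n -> basis n -> C.

Definition op_comp n (A B : op n) : op n :=
  fun y x => \sum_(z : basis n) A y z * B z x.

Definition op_id n : op n := fun y x => (y == x)%:R.

(* run a gate sequence: the first gate of the list is applied first *)
Definition seq_op n (s : seq (op n)) : op n :=
  foldr (fun g acc => op_comp acc g) (@op_id n) s.

Definition flip n (t : 'I_n) (x : basis n) : basis n :=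
  [ffun i => if i == t then ~~ x i else x i].

Definition cnot_op n (c t : 'I_n) : op n :=
  fun y x => (y == if x c then flip t x else x)%:R.

Definition phase_op n (q : 'I_n) (a : C) : op n :=
  fun y x => (y == x)%:R * (if x q then a else 1).

(* Z^{2^{1-l}} = |0><0| + e^{i pi 2^{1-l}} |1><1| ; its inverse has phase
   e^{-i pi 2^{1-l}} *)
Definition zl_phase (l : nat) : R := pi * (2 / 2 ^+ l).
Definition layer_gate n (l : nat) (g : 'I_n * bool) : op n :=
  phase_op g.1 (expi (if g.2 then - zl_phase l else zl_phase l)).

(* C^k Z^{2^{k-l+1}} on k+1 qubits: phase e^{i pi 2^{1+k-l}} on |1^{k+1}> *)
Definition ckz_op (k l : nat) : op k.+1 :=
  fun y x => (y == x)%:R *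
    (if [forall i, x i] then expi (pi * (2 ^+ k.+1 / 2 ^+ l)) else 1).

(* the circuit: CNOTs, then one layer of Z^{2^{1-l}} / (Z^{2^{1-l}})^{-1}
   gates on pairwise distinct qubits (bool = true means the inverse), then CNOTs *)
Definition circuit_op n (l : nat) (pre : seq ('I_n * 'I_n))
    (layer : seq ('I_n * bool)) (post : seq ('I_n * 'I_n)) : op n :=
  seq_op ([seq cnot_op p.1 p.2 | p <- pre] ++ [seq layer_gate l g | g <- layer]
          ++ [seq cnot_op p.1 p.2 | p <- post]).

Definition wf_cnots n (s : seq ('I_n * 'I_n)) : bool := all (fun p => p.1 != p.2) s.

(* data qubits are the first d, ancillas the last m *)
Definition join d m (x : basis d) (a : basis m) : basis (d + m) :=
  [ffun i => match split i with inl j => x j | inr j => a j end].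
Definition data_part d m (y : basis (d + m)) : basis d := [ffun j => y (lshift m j)].
Definition anc_part d m (y : basis (d + m)) : basis m := [ffun j => y (rshift d j)].
Definition zero_basis m : basis m := [ffun _ => false].

Definition implements_with_ancillas d m (U : op (d + m)) (G : op d) : Prop :=
  forall (x : basis d) (y : basis (d + m)),
    U y (join x (zero_basis m)) =
      if anc_part y == zero_basis m then G (data_part y) x else 0.

End Qcirc.

(* Main.v *)
Require Import Defs.
From HB Require Import structures.
From mathcomp Require Import all_boot all_order all_algebra.
From mathcomp Require Import reals trigo complex.
From mathcomp Require Import boolp ring.
Import Order.TTheory GRing.Theory Num.Theory.
Local Open Scope ring_scope.
Set Implicit Arguments. Unset Strict Implicit.

Section S.
Variable R : realType.
Local Notation C := (R[i]).

Definition mop n (g : (basis n -> basis n) * (basis n -> C)) : op R n :=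
  fun z x => (z == g.1 x)%:R * g.2 x.

Fixpoint runf n (s : seq ((basis n -> basis n) * (basis n -> C))) x :=
  if s is g :: s' then runf s' (g.1 x) else x.
Fixpoint runp n (s : seq ((basis n -> basis n) * (basis n -> C))) x : C :=
  if s is g :: s' then g.2 x * runp s' (g.1 x) else 1.

Lemma comp_mop n (A : op R n) g y x : op_comp A (mop g) y x = A y (g.1 x) * g.2 x.
Proof.
rewrite /op_comp /mop (bigD1 (g.1 x)) //= eqxx mul1r big1 ?addr0 // => z /negbTE ->.
by rewrite mul0r mulr0.
Qed.

Lemma seq_mop n s y x :
  seq_op (map (@mop n) s) y x = (y == runf s x)%:R * runp s x.
Proof.
elim: s x => [|g s IH] x /=; first by rewrite /op_id mulr1.
rewrite comp_mop IH -mulrA mulrC.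
by rewrite mulrC [g.2 x * _]mulrC.
Qed.

Lemma runf_cat n (s1 s2 : seq ((basis n -> basis n) * (basis n -> C))) x :
  runf (s1 ++ s2) x = runf s2 (runf s1 x).
Proof. by elim: s1 x => //= g s IH x. Qed.

Lemma runp_cat n (s1 s2 : seq ((basis n -> basis n) * (basis n -> C))) x :
  runp (s1 ++ s2) x = runp s1 x * runp s2 (runf s1 x).
Proof. by elim: s1 x => [|g s IH] x /=; rewrite ?mul1r // IH mulrA. Qed.

Definition cnotf n (p : 'I_n * 'I_n) (x : basis n) : basis n :=
  if x p.1 then flip p.2 x else x.
Definition cnotP n (p : 'I_n * 'I_n) := (@cnotf n p, fun _ : basis n => (1 : C)).
Definition layP n l (g : 'I_n * bool) :=
  (fun x : basis n => x,
   fun x : basis n => if x g.1 then expi (if g.2 then - zl_phase R l else zl_phase R l) else 1).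

Lemma cnot_mop n (p : 'I_n * 'I_n) : cnot_op R p.1 p.2 = mop (cnotP p).
Proof. by apply/funext => y; apply/funext => x; rewrite /mop /= mulr1. Qed.

Lemma lay_mop n l (g : 'I_n * bool) : layer_gate R l g = mop (layP l g).
Proof. by apply/funext => y; apply/funext => x; rewrite /mop /layer_gate /phase_op. Qed.

Lemma circuit_mop n l pre layer post :
  circuit_op R l pre layer post =
  seq_op (map (@mop n) ([seq cnotP p | p <- pre] ++ [seq layP l g | g <- layer]
          ++ [seq cnotP p | p <- post])).
Proof.
rewrite /circuit_op !map_cat -!map_comp.
congr (seq_op (_ ++ _ ++ _)); apply: eq_map => ? /=; by rewrite ?cnot_mop ?lay_mop.
Qed.

Lemma runp_cnot n (s : seq ('I_n * 'I_n)) x : runp [seq cnotP p | p <- s] x = 1.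
Proof. by elim: s x => //= p s IH x; rewrite IH mul1r. Qed.

Lemma runf_lay n l (s : seq ('I_n * bool)) x : runf [seq layP l g | g <- s] x = x.
Proof. by elim: s x. Qed.

Lemma runp_lay n l (s : seq ('I_n * bool)) x : runp [seq layP l g | g <- s] x =
  \prod_(g <- s) (if x g.1 then expi (if g.2 then - zl_phase R l else zl_phase R l) else 1).
Proof. by elim: s x => [|g s IH] x /=; rewrite ?big_nil ?big_cons ?IH. Qed.


Definition tog n (s : seq ('I_n * 'I_n)) (z : basis n) q :=
  \big[addb/false]_(p <- s | p.2 == q) z p.1.

Definition ctl_ok n (s : seq ('I_n * 'I_n)) :=
  forall p p', p \in s -> p' \in s -> p'.1 != p.2.

Lemma runf_cnots n (s : seq ('I_n * 'I_n)) z : ctl_ok s ->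
  runf [seq cnotP p | p <- s] z = [ffun q => z q (+) tog s z q].
Proof.
elim: s z => [|p s IH] z ok /=.
  by apply/ffunP => q; rewrite ffunE /tog big_nil addbF.
rewrite IH; last by move=> a b ha hb; apply: ok; rewrite inE ?ha ?hb orbT.
apply/ffunP => q; rewrite !ffunE /tog big_cons.
have -> : \big[addb/false]_(p' <- s | p'.2 == q) cnotf p z p'.1 =
          \big[addb/false]_(p' <- s | p'.2 == q) z p'.1.
  rewrite big_seq_cond [RHS]big_seq_cond; apply: eq_bigr => p' /andP[hp' _]; rewrite /cnotf /flip.
  case: (z p.1) => //; rewrite ffunE.
  have hp'' : p' \in p :: s by rewrite inE hp' orbT.
  by have := ok p p' (mem_head _ _) hp''; move/negbTE => ->.
rewrite /cnotf /flip; case: (z p.1); last by case: (p.2 == q).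
rewrite ffunE eq_sym; case: (p.2 == q) => //.
by case: (z q); case: (\big[addb/false]_(j <- s | j.2 == q) z j.1).
Qed.

Lemma tog_ctl n (s : seq ('I_n * 'I_n)) z p : ctl_ok s -> p \in s -> tog s z p.1 = false.
Proof.
move=> ok hp; rewrite /tog big1_seq // => p' /andP[/eqP h hp'].
by move: (ok p' p hp' hp); rewrite h eqxx.
Qed.

Lemma tog_ext n (s : seq ('I_n * 'I_n)) (z1 z2 : basis n) q :
  (forall p, p \in s -> z1 p.1 = z2 p.1) -> tog s z1 q = tog s z2 q.
Proof.
move=> h; rewrite /tog big_seq_cond [RHS]big_seq_cond.
by apply: eq_bigr => p /andP[hp _]; apply: h.
Qed.

Lemma runf_cnots_inv n (s : seq ('I_n * 'I_n)) z : ctl_ok s ->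
  runf [seq cnotP p | p <- s] (runf [seq cnotP p | p <- s] z) = z.
Proof.
move=> ok; rewrite !runf_cnots //; apply/ffunP => q; rewrite !ffunE.
have -> : tog s [ffun q => z q (+) tog s z q] q = tog s z q.
  by apply: tog_ext => p hp; rewrite ffunE tog_ctl // addbF.
by rewrite -addbA addbb addbF.
Qed.

Lemma expi0 : expi (0 : R) = 1.
Proof. by rewrite /expi cos0 sin0. Qed.

Lemma expiD (a b : R) : expi (a + b) = expi a * expi b.
Proof.
rewrite /expi cosD sinD /=. congr Complex; ring.
Qed.

Lemma expi_if (b : bool) (t : R) : (if b then expi t else 1) = expi (t * b%:R).
Proof. by case: b; rewrite ?mulr1 ?mulr0 ?expi0. Qed.

Lemma prod_expi I (r : seq I) (f : I -> R) :
  \prod_(i <- r) expi (f i) = expi (\sum_(i <- r) f i).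
Proof. by rewrite (big_morph (@expi R) expiD expi0). Qed.

Lemma sum_subsets n (f : 'I_n -> R) :
  \sum_(S : {set 'I_n}) \prod_(i in S) f i = \prod_i (f i + 1).
Proof.
rewrite bigA_distr; apply: eq_bigr => S _. by rewrite [LHS]big_mkcond.
Qed.


Lemma key k (x : basis k.+1) (th : R) :
  \sum_(S : {set 'I_k.+1}) (if ~~ odd #|S| then - th else th) *
      (\big[addb/false]_(i in S) x i)%:R
  = th * 2 ^+ k * [forall i, x i]%:R.
Proof.
have e1 : forall b : bool, (b%:R : R) = (1 - (-1)^+b) / 2.
  by case; rewrite /= ?expr0 ?expr1 ?subrr ?mul0r // opprK -mulr2n divrr // unitfE pnatr_eq0.
have e2 : forall m, (if ~~ odd m then - th else th) = - th * (-1)^+m.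
  by move=> m; rewrite -signr_odd; case: (odd m); rewrite /= ?expr0 ?expr1 ?mulr1 ?mulrN1 ?opprK.
have e3 : forall S : {set 'I_k.+1},
    (-1)^+ (\big[addb/false]_(i in S) x i) = \prod_(i in S) (-1)^+(x i) :> R.
  by move=> S; rewrite (@big_morph _ _ (fun b : bool => (-1)^+b : R) 1 *%R false addb (@signr_addb R) (erefl _)).
have e4 : forall S : {set 'I_k.+1},
    - th * (-1)^+#|S| * ((1 - \prod_(i in S) (-1)^+(x i)) / 2) =
    (- th / 2) * (\prod_(i in S) (-1) - \prod_(i in S) (- (-1)^+(x i))) :> R.
  move=> S; have -> : \prod_(i in S) (- (-1)^+(x i)) = (-1)^+#|S| * \prod_(i in S) (-1)^+(x i) :> R.
    rewrite -prodr_const -big_split; by apply: eq_bigr => i _ /=; rewrite mulN1r.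
  rewrite prodr_const; ring.
under eq_bigr => S _ do rewrite e1 e2 e3 e4.
rewrite -mulr_sumr sumrB !sum_subsets.
have -> : \prod_(i < k.+1) (-1 + 1) = 0 :> R.
  by rewrite big_ord_recl addNr mul0r.
case: forallP => [hall | hn].
  have -> : \prod_(i < k.+1) (- (-1) ^+ x i + 1) = 2 ^+ k.+1 :> R.
    rewrite (eq_bigr (fun _ => 2)) => [|i _]; last by rewrite hall expr1 opprK.
    by rewrite prodr_const card_ord.
  rewrite exprS /= mulr1 sub0r mulrN !mulNr opprK mulrA divfK //.
  by rewrite pnatr_eq0.
have [i /negbTE hi] : exists i, ~~ x i.
  by apply/existsP; rewrite -negb_forall; apply/negP => /forallP.
rewrite (bigD1 i) //= hi expr0 addNr mul0r subrr.
by rewrite /= !mulr0.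
Qed.



Section Constr.
Variable k : nat.
Local Notation T := {set 'I_k.+1}.
Local Notation m := #|{: T}|.
Local Notation N := (k.+1 + m)%N.

Definition dat (i : 'I_k.+1) : 'I_N := lshift m i.
Definition anc (A : T) : 'I_N := rshift k.+1 (enum_rank A).
Definition preL : seq ('I_N * 'I_N) :=
  flatten [seq [seq (dat i, anc A) | i <- enum A] | A <- enum T].
Definition layL : seq ('I_N * bool) := [seq (anc A, ~~ odd #|A|) | A <- enum T].

Lemma eq_anc A B : (anc B == anc A) = (B == A).
Proof. by rewrite /anc eq_rshift (inj_eq enum_rank_inj). Qed.

Lemma mem_pre p : p \in preL -> exists i A, p = (dat i, anc A).
Proof.
by case/flattenP => l /mapP[A _ ->] /mapP[i _ ->]; exists i, A.
Qed.

Lemma ctl_pre : ctl_ok preL.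
Proof.
move=> p p' /mem_pre[i [A ->]] /mem_pre[i' [B ->]] /=.
by rewrite /dat /anc eq_lrshift.
Qed.

Lemma tog_pre (z : basis N) A : tog preL z (anc A) = \big[addb/false]_(i in A) z (dat i).
Proof.
have h1 : forall B, \big[addb/false]_(p <- [seq (dat i, anc B) | i <- enum B] | p.2 == anc A) z p.1
    = if B == A then \big[addb/false]_(i in A) z (dat i) else false.
  move=> B; rewrite big_map.
  rewrite (eq_bigl (fun _ => B == A)) => [|j]; last by rewrite /= eq_anc.
  case: (eqVneq B A) => [->|ne]; last by rewrite big_pred0.
  by rewrite big_enum.
rewrite /tog /preL big_flatten big_map (eq_bigr _ (fun B _ => h1 B)).
rewrite big_enum (bigD1 A) // eqxx.
set X := \big[addb/false]_(i in A) _.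
rewrite big1 => [|B /andP[_ /negbTE ->] //]; exact: addbF.
Qed.

End Constr.

Lemma join_dat d m (x : basis d) (a : basis m) i : join x a (lshift m i) = x i.
Proof. by rewrite /join ffunE (unsplitK (inl i : 'I_d + 'I_m)). Qed.

Lemma join_anc d m (x : basis d) (a : basis m) j : join x a (rshift d j) = a j.
Proof. by rewrite /join ffunE (unsplitK (inr j : 'I_d + 'I_m)). Qed.

Lemma eq_join d m (y : basis (d + m)) x a :
  (y == join x a) = (data_part y == x) && (anc_part y == a).
Proof.
apply/eqP/andP => [->|[/eqP <- /eqP <-]].
  by split; apply/eqP/ffunP => i; rewrite ffunE ?join_dat ?join_anc.
apply/ffunP => q; rewrite -(splitK q); case: (split q) => j /=.
  by rewrite join_dat ffunE.
by rewrite join_anc ffunE.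
Qed.

End S.

Unset Implicit Arguments.

Theorem theorem4 (R : realType) (l k : nat) :
  (1 <= l)%N -> (k <= l - 1)%N ->
  exists (m : nat) (pre : seq ('I_(k.+1 + m) * 'I_(k.+1 + m)))
         (layer : seq ('I_(k.+1 + m) * bool)) (post : seq ('I_(k.+1 + m) * 'I_(k.+1 + m))),
    [/\ wf_cnots pre, wf_cnots post, uniq [seq g.1 | g <- layer] &
      implements_with_ancillas (@circuit_op R _ l pre layer post) (@ckz_op R k l)].
Proof.
move=> _ _.
exists #|{: {set 'I_k.+1}}|, (preL k), (layL k), (preL k).
have wf : wf_cnots (preL k).
  by apply/allP => p /mem_pre [i [A ->]]; rewrite /= /dat /anc eq_lrshift.
split => //.
  rewrite /layL -map_comp map_inj_uniq ?enum_uniq // => A B /rshift_inj/enum_rank_inj.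
  done.
move=> x y.
rewrite circuit_mop seq_mop !runf_cat runf_lay runf_cnots_inv; last exact: ctl_pre.
rewrite !runp_cat runf_lay !runp_cnot runp_lay mul1r mulr1.
set w := runf _ (join x (zero_basis _)).
have hw : forall A, w (anc A) = \big[addb/false]_(i in A) x i.
  move=> A; rewrite /w runf_cnots; last exact: ctl_pre.
  rewrite ffunE tog_pre /anc join_anc ffunE /=.
  by apply: eq_bigr => i _; rewrite /dat join_dat.
rewrite /layL big_map.
under eq_bigr => A _ do rewrite /= hw expi_if.
rewrite prod_expi big_enum /=.
rewrite (eq_bigl xpredT) => [|A]; last by rewrite inE.
rewrite key eq_join /ckz_op.
case: (anc_part y == _); rewrite ?andbF ?andbT ?mul0r //.
case: (data_part y == x); rewrite ?mul0r ?mul1r //.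
case: [forall i, x i]; rewrite /= ?mulr0 ?expi0 // mulr1.
congr expi; rewrite /zl_phase exprS; ring.
Qed.
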